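(* Let $\sigma$ be a symmetry of a pseudo-Boolean formula with support $\{x_{i_1},\dots,x_{i_k}\}$, $i_1<\dots<i_k$, and write $p_j=x_{i_j}$, $q_j=\sigma(x_{i_j})$. From the circuit constraints for $\sigma$ (defined below) together with $t_k\ge1$, the symmetry-breaking clauses $s_1+\bar p_1\ge1$; $s_{j+1}+\bar s_j+\bar p_{j+1}\ge1$ ($1\le j\le k-2$); $s_1+q_1\ge1$; $s_{j+1}+\bar s_j+q_{j+1}\ge1$ ($1\le j\le k-2$); $q_1+\bar p_1\ge1$; $\bar s_j+q_{j+1}+\bar p_{j+1}\ge1$ ($1\le j\le k-1$) can be derived using $O(k)$ RUP steps and cutting planes steps.
   Context: Literals are $x$ or $\bar x=1-x$; PB constraints $\sum_i c_i\ell_i\ge A$; $\neg(\sum c_i\ell_i\ge A)\doteq\sum c_i\bar\ell_i\ge\sum c_i-A+1$. A symmetry $\sigma$ of a formula $F$ is a permutation of literals with $\sigma(\bar\ell)=\overline{\sigma(\ell)}$ and finite support $\{x:\sigma(x)\ne x\}$ such that applying $\sigma$ to $F$ yields $F$ syntactically. Circuit constraints for $\sigma$ (fresh variables $s_1..s_{k-1}$, $t_1..t_k$): $\bar s_1+p_1+\bar q_1\ge1$; $2s_1+\bar p_1+q_1\ge2$; for $1\le j\le k-2$: $3\bar s_{j+1}+2s_j+p_{j+1}+\bar q_{j+1}\ge3$, $2s_{j+1}+2\bar s_j+\bar p_{j+1}+q_{j+1}\ge2$; $\bar t_1+q_1+\bar p_1\ge1$; $2t_1+\bar q_1+p_1\ge2$;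 for $1\le j\le k-1$: $4\bar t_{j+1}+3t_j+\bar s_j+q_{j+1}+\bar p_{j+1}\ge4$, $3t_{j+1}+3\bar t_j+s_j+\bar q_{j+1}+p_{j+1}\ge3$. A cutting planes step derives a new constraint from a bounded number of available constraints and literal axioms using addition, positive multiplication, division with rounding up, saturation ($\sum c_i\ell_i\ge A\mapsto\sum\min(c_i,A)\ell_i\ge A$) and weakening. A RUP step derives $D$ if unit propagation on the available constraints together with $\neg D$ reaches a conflict (unit propagation: a constraint with negative slack $\sum_{i:\rho(\ell_i)\ne0}c_i-A$ under partial assignment $\rho$ is a conflict; an unassigned literal whose coefficient exceeds the slack is set to true). *)

(* Defs.v *)
From HB Require Import structures.
From mathcomp Require Import all_boot all_order all_algebra.
Set Implicit Arguments. Unset Strict Implicit. Unset Printing Implicit Defensive.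
Import Order.TTheory GRing.Theory Num.Theory.
Local Open Scope ring_scope.

(* Original formula: variables x_n (n : nat), literals (n, b) where        *)
(* b = true means x_n and b = false means \bar x_n.                        *)
Definition olit := (nat * bool)%type.
Definition oneg (l : olit) : olit := (l.1, ~~ l.2).
(* A PB constraint  sum_i c_i l_i >= A  over original literals.            *)
Definition ocons := (seq (int * olit) * int)%type.
Definition osubst (sigma : olit -> olit) (C : ocons) : ocons :=
  ([seq (t.1, sigma t.2) | t <- C.1], C.2).
Definition oceq (C D : ocons) : bool := perm_eq C.1 D.1 && (C.2 == D.2).

Definition is_symmetry (F : seq ocons) (sigma : olit -> olit) (supp : seq nat) : Prop :=
  [/\ bijective sigma,
      (forall l, sigma (oneg l) = oneg (sigma l)) &
      sorted ltn supp] /\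
  [/\
      (forall n, (n \in supp) = (sigma (n, true) != (n, true))),
      (forall C, C \in F -> exists2 D, D \in F & oceq (osubst sigma C) D)
    & (forall D, D \in F -> exists2 C, C \in F & oceq (osubst sigma C) D)].

Inductive var := X of nat | S of nat | T of nat.

Definition var_enc (v : var) : nat * nat :=
  match v with X n => (0%N, n) | S n => (1%N, n) | T n => (2%N, n) end.
Definition var_dec (p : nat * nat) : option var :=
  match p with
  | (0, n) => Some (X n) | (1, n) => Some (S n) | (2, n) => Some (T n)
  | _ => None end%N.
Lemma var_encK : pcancel var_enc var_dec. Proof. by case. Qed.
HB.instance Definition _ := Countable.copy var (pcan_type var_encK).

(* literal (v, true) = v, (v, false) = \bar v *)
Definition lit := (var * bool)%type.
Definition neg (l : lit) : lit := (l.1, ~~ l.2).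
Definition of_olit (l : olit) : lit := (X l.1, l.2).

(* A PB constraint  sum_i c_i l_i >= A ; terms may be unnormalized.        *)
Definition pbc := (seq (int * lit) * int)%type.

(* linear form over variables: sum_v a_v v >= b  (using \bar v = 1 - v)   *)
Definition coefv (C : pbc) (v : var) : int :=
  \sum_(t <- C.1 | t.2.1 == v) (if t.2.2 then t.1 else - t.1).
Definition rhs (C : pbc) : int := C.2 - \sum_(t <- C.1 | ~~ t.2.2) t.1.
Definition vars (C : pbc) : seq var := undup [seq t.2.1 | t <- C.1].

Definition normalize (C : pbc) : pbc :=
  ([seq (if 0 < coefv C v then (coefv C v, (v, true)) else (- coefv C v, (v, false)))
     | v <- vars C & coefv C v != 0],
   rhs C + \sum_(v <- vars C | coefv C v < 0) (- coefv C v)).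

Definition pequiv (C D : pbc) : Prop :=
  (forall v, coefv C v = coefv D v) /\ rhs C = rhs D.

(* negation:  not (sum c_i l_i >= A)  ==  sum c_i \bar l_i >= sum c_i - A + 1 *)
Definition negc (C : pbc) : pbc :=
  let N := normalize C in
  ([seq (t.1, neg t.2) | t <- N.1], \sum_(t <- N.1) t.1 - N.2 + 1).

Definition lit_axiom (l : lit) : pbc := ([:: (1, l)], 0).
Definition addc (C D : pbc) : pbc := (C.1 ++ D.1, C.2 + D.2).
Definition mulc (m : int) (C : pbc) : pbc := ([seq (m * t.1, t.2) | t <- C.1], m * C.2).
Definition cdiv (a d : int) : int := - ((- a) %/ d)%Z.
Definition divc (d : int) (C : pbc) : pbc :=
  let N := normalize C in ([seq (cdiv t.1 d, t.2) | t <- N.1], cdiv N.2 d).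
Definition satc (C : pbc) : pbc :=
  let N := normalize C in ([seq (Num.min t.1 N.2, t.2) | t <- N.1], N.2).
Definition weakc (v : var) (C : pbc) : pbc :=
  let N := normalize C in
  ([seq t <- N.1 | t.2.1 != v], N.2 - \sum_(t <- N.1 | t.2.1 == v) t.1).

Definition available (G : seq pbc) (C : pbc) : Prop :=
  C \in G \/ exists l, C = lit_axiom l.

Inductive cp_step (G : seq pbc) : pbc -> Prop :=
| cp_add A B : available G A -> available G B -> cp_step G (addc A B)
| cp_mul m A : available G A -> 0 < m -> cp_step G (mulc m A)
| cp_div d A : available G A -> 0 < d -> cp_step G (divc d A)
| cp_sat A : available G A -> 0 <= (normalize A).2 -> cp_step G (satc A)
| cp_weak v A : available G A -> cp_step G (weakc v A).

(* Unit propagation. A partial assignment is the list of literals set true. *)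
Definition slack (C : pbc) (rho : seq lit) : int :=
  let N := normalize C in \sum_(t <- N.1 | neg t.2 \notin rho) t.1 - N.2.

Inductive up_reach (D : seq pbc) : seq lit -> Prop :=
| up_nil : up_reach D [::]
| up_cons rho C t : up_reach D rho -> C \in D -> t \in (normalize C).1 ->
    t.2 \notin rho -> neg t.2 \notin rho -> slack C rho < t.1 ->
    up_reach D (t.2 :: rho).

Definition rup_step (G : seq pbc) (C : pbc) : Prop :=
  exists rho, exists2 E, E \in negc C :: G &
    up_reach (negc C :: G) rho /\ slack E rho < 0.

Fixpoint valid_deriv (G : seq pbc) (L : seq pbc) : Prop :=
  match L with
  | [::] => True
  | C :: L' => (rup_step G C \/ cp_step G C) /\ valid_deriv (rcons G C) L'
  end.

Definition derives (G : seq pbc) (L : seq pbc) (targets : seq pbc) : Prop :=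
  valid_deriv G L /\ forall D, D \in targets -> exists2 E, E \in L & pequiv D E.

(* Circuit constraints and symmetry-breaking clauses, indices from 1.      *)
Section Circuit.
Variables (p q : nat -> lit).
Let s j : lit := (S j, true).
Let t j : lit := (T j, true).

Definition circuit (k : nat) : seq pbc :=
  [:: ([:: (1, neg (s 1)); (1, p 1); (1, neg (q 1))], 1);
      ([:: (2, s 1); (1, neg (p 1)); (1, q 1)], 2)]
  ++ flatten [seq [:: ([:: (3, neg (s j.+1)); (2, s j); (1, p j.+1); (1, neg (q j.+1))], 3);
                      ([:: (2, s j.+1); (2, neg (s j)); (1, neg (p j.+1)); (1, q j.+1)], 2)]
             | j <- iota 1 (k - 2)]
  ++ [:: ([:: (1, neg (t 1)); (1, q 1); (1, neg (p 1))], 1);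
         ([:: (2, t 1); (1, neg (q 1)); (1, p 1)], 2)]
  ++ flatten [seq [:: ([:: (4, neg (t j.+1)); (3, t j); (1, neg (s j)); (1, q j.+1);
                           (1, neg (p j.+1))], 4);
                      ([:: (3, t j.+1); (3, neg (t j)); (1, s j); (1, neg (q j.+1));
                           (1, p j.+1)], 3)]
             | j <- iota 1 (k - 1)].

Definition tk_unit (k : nat) : pbc := ([:: (1, t k)], 1).

Definition sb_clauses (k : nat) : seq pbc :=
  [:: ([:: (1, s 1); (1, neg (p 1))], 1)]
  ++ [seq ([:: (1, s j.+1); (1, neg (s j)); (1, neg (p j.+1))], 1) | j <- iota 1 (k - 2)]
  ++ [:: ([:: (1, s 1); (1, q 1)], 1)]
  ++ [seq ([:: (1, s j.+1); (1, neg (s j)); (1, q j.+1)], 1) | j <- iota 1 (k - 2)]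
  ++ [:: ([:: (1, q 1); (1, neg (p 1))], 1)]
  ++ [seq ([:: (1, neg (s j)); (1, q j.+1); (1, neg (p j.+1))], 1) | j <- iota 1 (k - 1)].
End Circuit.

(* p_j = x_{i_j},  q_j = sigma(x_{i_j}) ,  j = 1..k *)
Definition pvar (supp : seq nat) (j : nat) : lit := (X (nth 0%N supp j.-1), true).
Definition qvar (sigma : olit -> olit) (supp : seq nat) (j : nat) : lit :=
  of_olit (sigma (nth 0%N supp j.-1, true)).

(* Main.v *)
Require Import Defs.
From mathcomp Require Import all_boot all_order all_algebra.
From mathcomp Require Import zify.
Set Implicit Arguments. Unset Strict Implicit. Unset Printing Implicit Defensive.
Import Order.TTheory GRing.Theory Num.Theory.
Local Open Scope ring_scope.

Definition step G C := rup_step G C \/ cp_step G C.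

Lemma up_reach_mono D D' rho : {subset D <= D'} -> up_reach D rho -> up_reach D' rho.
Proof.
move=> sub; elim=> [|r C t _ IH CD tN a b c]; first exact: up_nil.
exact: (up_cons IH (sub _ CD)).
Qed.

Lemma avail_mono G G' C : {subset G <= G'} -> available G C -> available G' C.
Proof. by move=> sub [h|h]; [left; apply: sub|right]. Qed.

Lemma step_mono G G' C : {subset G <= G'} -> step G C -> step G' C.
Proof.
move=> sub [[rho [E EG [ur sl]]]|cp].
  left; exists rho; exists E.
    by move: EG; rewrite !inE => /orP[->//|/sub ->]; rewrite orbT.
  split=> //; apply: up_reach_mono ur => x; rewrite !inE => /orP[->//|/sub ->].
  by rewrite orbT.
right; case: cp => [A B a b|m A a m0|d A a d0|A a h|v A a].
- by apply: cp_add; [exact: (avail_mono sub a)|exact: (avail_mono sub b)].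
- by apply: cp_mul => //; exact: (avail_mono sub a).
- by apply: cp_div => //; exact: (avail_mono sub a).
- by apply: cp_sat => //; exact: (avail_mono sub a).
- by apply: cp_weak; exact: (avail_mono sub a).
Qed.

Lemma valid_mono L G G' : {subset G <= G'} -> valid_deriv G L -> valid_deriv G' L.
Proof.
elim: L G G' => [//|C L IH] G G' sub /= [h1 h2]; split.
  exact: (step_mono sub h1).
apply: IH h2 => x; rewrite !mem_rcons !inE => /orP[->//|/sub ->]; by rewrite orbT.
Qed.

Lemma valid_cat L1 L2 G : valid_deriv G L1 -> valid_deriv (G ++ L1) L2 ->
  valid_deriv G (L1 ++ L2).
Proof.
elim: L1 G => [|C L1 IH] G /=; first by rewrite cats0.
by move=> [h1 h2] h3; split => //; apply: IH => //; rewrite cat_rcons.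
Qed.

Lemma valid_each L G : (forall C, C \in L -> step G C) -> valid_deriv G L.
Proof.
elim: L G => [//|C L IH] G h /=; split; first by apply: h; rewrite inE eqxx.
apply: IH => D DL; apply: (@step_mono G); first by move=> x xG; rewrite mem_rcons inE xG orbT.
by apply: h; rewrite inE DL orbT.
Qed.

Lemma neg_inv l : neg (neg l) = l.
Proof. by case: l => v b; rewrite /neg /= negbK. Qed.

Lemma up_consistent D rho : up_reach D rho -> forall l, l \in rho -> neg l \notin rho.
Proof.
elim=> [//|r C t _ IH _ _ n1 n2 _] l; rewrite inE => /orP[/eqP->|lr].
  rewrite inE negb_or n2 andbT; apply/eqP; case: (t.2) => v b [] /=; by case: b.
rewrite inE; apply/negP => /orP[/eqP e|]; last by apply/negP; apply: IH.
by move: n2; rewrite -e neg_inv lr.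
Qed.
Definition Pv (s : seq (int * lit)) v := \sum_(t <- s | (t.2.1 == v) && t.2.2) t.1.
Definition Mv (s : seq (int * lit)) v := \sum_(t <- s | (t.2.1 == v) && ~~ t.2.2) t.1.

Lemma coefv_PM C v : coefv C v = Pv C.1 v - Mv C.1 v.
Proof.
rewrite /coefv /Pv /Mv; elim: C.1 => [|t s IH]; first by rewrite !big_nil subr0.
rewrite !big_cons IH.
case: (t.2.1 == v); case: (t.2.2) => /=; lia.
Qed.

Lemma partition_vars (s : seq (int * lit)) (F : int * lit -> int) :
  \sum_(t <- s) F t = \sum_(v <- undup [seq t.2.1 | t <- s]) \sum_(t <- s | t.2.1 == v) F t.
Proof.
rewrite (eq_bigr (fun v => \sum_(t <- s) (if t.2.1 == v then F t else 0))); last first.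
  by move=> v _; rewrite big_mkcond.
rewrite exchange_big /=; apply: eq_big_seq => t ts.
rewrite -big_mkcond big_const_seq.
have -> : count (fun v => t.2.1 == v) (undup [seq t.2.1 | t <- s]) = 1%N.
  rewrite (eq_count (a2 := pred1 t.2.1)); last by move=> x /=; rewrite eq_sym.
  rewrite count_uniq_mem ?undup_uniq // mem_undup.
  by rewrite (map_f (fun t : int * lit => t.2.1) ts).
by rewrite /= addr0.
Qed.

Lemma sum_split_var (s : seq (int * lit)) v (rho : seq lit) :
  \sum_(t <- s | t.2.1 == v) (if neg t.2 \in rho then 0 else t.1) =
  (if (v, false) \in rho then 0 else Pv s v) + (if (v, true) \in rho then 0 else Mv s v).
Proof.
rewrite /Pv /Mv; elim: s => [|t s IH]; first by rewrite !big_nil; case: ifP; case: ifP.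
rewrite !big_cons IH; case: t => c [w b] /=.
case: (eqVneq w v) => [->|] /=; last by [].
case: b => /=; case: ifP; case: ifP; rewrite /neg /= => h1 h2; lia.
Qed.

Lemma sum_ineq (U : seq var) (g M N H : var -> int) c :
  (forall v, g v + M v - N v <= H v) ->
  \sum_(v <- U) g v - (c - \sum_(v <- U) M v + \sum_(v <- U) N v) <= \sum_(v <- U) H v - c.
Proof.
move=> h; suff : \sum_(v <- U) g v + \sum_(v <- U) M v - \sum_(v <- U) N v <=
       \sum_(v <- U) H v by lia.
by rewrite -big_split -sumrB; apply: ler_sum => v _; apply: h.
Qed.

Lemma slack_le C rho : (forall l, l \in rho -> neg l \notin rho) ->
  (forall t, t \in C.1 -> 0 <= t.1) ->
  slack C rho <= \sum_(t <- C.1) (if neg t.2 \in rho then 0 else t.1) - C.2.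
Proof.
move=> cons pos.
rewrite /slack /normalize /= big_map big_filter_cond big_mkcond /=.
rewrite /rhs (big_mkcond (fun t : int * lit => ~~ t.2.2)).
rewrite partition_vars (partition_vars C.1 (fun t => if neg t.2 \in rho then 0 else t.1)).
rewrite -/(vars C) (big_mkcond (fun v => coefv C v < 0)).
have E1 : \sum_(v <- vars C) \sum_(t <- C.1 | t.2.1 == v) (if ~~ t.2.2 then t.1 else 0)
  = \sum_(v <- vars C) Mv C.1 v.
  by apply: eq_bigr => v _; rewrite -big_mkcondr.
have E2 : \sum_(v <- vars C) \sum_(t <- C.1 | t.2.1 == v) (if neg t.2 \in rho then 0 else t.1)
  = \sum_(v <- vars C) ((if (v, false) \in rho then 0 else Pv C.1 v) +
   (if (v, true) \in rho then 0 else Mv C.1 v)).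
  by apply: eq_bigr => v _; rewrite sum_split_var.
rewrite E1 E2; apply: sum_ineq => v.
have P0 : 0 <= Pv C.1 v.
  by rewrite /Pv big_seq_cond; apply: sumr_ge0 => t /andP[ts _]; exact: pos.
have M0 : 0 <= Mv C.1 v.
  by rewrite /Mv big_seq_cond; apply: sumr_ge0 => t /andP[ts _]; exact: pos.
have cv := cons (v, true); have cf := cons (v, false).
rewrite coefv_PM /=.
move: P0 M0 cv cf; set P := Pv C.1 v; set M := Mv C.1 v; rewrite /neg /=.
case: (boolP (0 < P - M)) => h1 /=;
  case: ((v, true) \in rho); case: ((v, false) \in rho) => /=;
  repeat (case: ifP => ? /=); lia.
Qed.

Lemma sum_uniq_var (s : seq (int * lit)) (G : int * lit -> int) t :
  uniq [seq t.2.1 | t <- s] -> t \in s ->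
  \sum_(t' <- s | t'.2.1 == t.2.1) G t' = G t.
Proof.
elim: s => [//|x s IH] /= /andP[xn un]; rewrite inE big_cons => /orP[/eqP->|ts].
  rewrite eqxx big1_seq ?addr0 // => y /andP[/eqP ey ys].
  by move: xn; rewrite -ey (map_f (fun t : int * lit => t.2.1) ys).
have -> : (x.2.1 == t.2.1) = false.
  by apply/negP => /eqP e; move: xn; rewrite e (map_f (fun t : int * lit => t.2.1) ts).
exact: IH.
Qed.

Lemma normalize_nf C : uniq [seq t.2.1 | t <- C.1] -> (forall t, t \in C.1 -> 0 < t.1) ->
  normalize C = C.
Proof.
case: C => s r /= un pos.
have cv : forall t, t \in s -> coefv (s, r) t.2.1 = if t.2.2 then t.1 else - t.1.
  by move=> t ts; rewrite /coefv /= (sum_uniq_var (fun t => if t.2.2 then t.1 else - t.1)).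
rewrite /normalize /vars /= (undup_id un) filter_map.
have -> : [seq x <- s | preim (fun t => t.2.1) (fun v => coefv (s, r) v != 0) x] = s.
  rewrite -[RHS]filter_predT; apply: eq_in_filter => t ts /=; rewrite cv //.
  by have := pos t ts; case: (t.2.2) => /=; lia.
rewrite -map_comp map_id_in; last first.
  move=> [c [v b]] ts /=; rewrite (cv _ ts); have := pos _ ts => /=.
  by case: b ts => /= ts h; [rewrite h | rewrite oppr_gt0 ltNge (ltW h) /= opprK].
congr pair; rewrite /rhs /= big_map.
rewrite (big_seq_cond (fun t : int * lit => ~~ t.2.2)).
rewrite (big_seq_cond (fun t : int * lit => coefv (s, r) t.2.1 < 0)).
rewrite [X in _ + X](eq_bigl (fun t => (t \in s) && ~~ t.2.2)); last first.
  move=> t /=; case ts: (t \in s) => //=; rewrite cv //; have := pos t ts.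
  by case: (t.2.2) => /= h; lia.
rewrite [X in _ + X](eq_bigr (fun t => t.1)); last first.
  by move=> t /andP[ts nb]; rewrite cv //; move: nb; case: (t.2.2) => //= _; rewrite opprK.
by rewrite subrK.
Qed.

Lemma prop_step Dl rho C l c : up_reach Dl rho -> C \in Dl -> (c, l) \in (normalize C).1 ->
  l \notin rho -> neg l \notin rho -> (forall t, t \in C.1 -> 0 <= t.1) ->
  \sum_(t <- C.1) (if neg t.2 \in rho then 0 else t.1) - C.2 < c ->
  up_reach Dl (l :: rho).
Proof.
move=> ur CD tN n1 n2 pos h.
apply: (@up_cons Dl rho C (c, l)) => //.
exact: le_lt_trans (slack_le (up_consistent ur) pos) h.
Qed.

Lemma conflict_step Dl rho E : up_reach Dl rho -> (forall t, t \in E.1 -> 0 <= t.1) ->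
  \sum_(t <- E.1) (if neg t.2 \in rho then 0 else t.1) - E.2 < 0 -> slack E rho < 0.
Proof. by move=> ur pos h; exact: le_lt_trans (slack_le (up_consistent ur) pos) h. Qed.

Lemma lit_neq (l l' : lit) : l.1 != l'.1 -> (l == l') = false.
Proof. by case: l l' => v b [w c] /= h; rewrite xpair_eqE (negbTE h). Qed.

Lemma neg_fst l : (neg l).1 = l.1. Proof. by []. Qed.

Ltac ifs := rewrite /=; repeat (case: ifP => _ /=); lia.

Lemma rup3 G l1 l2 l3 E : l1.1 != l2.1 -> l1.1 != l3.1 -> l2.1 != l3.1 -> E \in G ->
  (forall t, t \in E.1 -> 0 <= t.1) ->
  \sum_(t <- E.1) (if neg t.2 \in [:: neg l3; neg l2; neg l1] then 0 else t.1) - E.2 < 0 ->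
  rup_step G ([:: (1, l1); (1, l2); (1, l3)], 1).
Proof.
move=> d12 d13 d23 EG Epos conf.
set D := (_, 1).
have nD : normalize D = D.
  apply: normalize_nf; last by move=> t; rewrite !inE => /or3P[]/eqP->.
  by rewrite /= !inE negb_or d12 d13 d23.
have nc : negc D = ([:: (1, neg l1); (1, neg l2); (1, neg l3)], 3).
  by rewrite /negc nD /= !big_cons big_nil.
have nn : normalize (negc D) = negc D.
  rewrite nc; apply: normalize_nf; last by move=> t; rewrite !inE => /or3P[]/eqP->.
  by rewrite /= !inE negb_or d12 d13 d23.
have pos : forall t, t \in (negc D).1 -> 0 <= t.1.
  by rewrite nc => t; rewrite !inE => /or3P[]/eqP->.
have inD : negc D \in negc D :: G by rewrite inE eqxx.
have r1 : up_reach (negc D :: G) [:: neg l1].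
  apply: (prop_step (c := 1) (up_nil _) inD) => //; first by rewrite nn nc !inE eqxx.
  by rewrite nc /= !big_cons big_nil; ifs.
have r2 : up_reach (negc D :: G) [:: neg l2; neg l1].
  apply: (prop_step (c := 1) r1 inD) => //; first by rewrite nn nc !inE eqxx ?orbT.
  - by rewrite inE lit_neq // !neg_fst eq_sym.
  - by rewrite inE lit_neq // !neg_fst eq_sym.
  - by rewrite nc /= !big_cons big_nil; ifs.
have r3 : up_reach (negc D :: G) [:: neg l3; neg l2; neg l1].
  apply: (prop_step (c := 1) r2 inD) => //; first by rewrite nn nc !inE eqxx ?orbT.
  - by rewrite !inE !lit_neq // !neg_fst eq_sym // eq_sym.
  - by rewrite !inE !lit_neq // !neg_fst eq_sym // eq_sym.
  - by rewrite nc /= !big_cons big_nil; ifs.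
exists [:: neg l3; neg l2; neg l1]; exists E; first by rewrite inE EG orbT.
by split => //; apply: conflict_step r3 Epos conf.
Qed.

Lemma rup2 G l1 l2 E : l1.1 != l2.1 -> E \in G ->
  (forall t, t \in E.1 -> 0 <= t.1) ->
  \sum_(t <- E.1) (if neg t.2 \in [:: neg l2; neg l1] then 0 else t.1) - E.2 < 0 ->
  rup_step G ([:: (1, l1); (1, l2)], 1).
Proof.
move=> d12 EG Epos conf.
set D := (_, 1).
have nD : normalize D = D.
  apply: normalize_nf; last by move=> t; rewrite !inE => /orP[]/eqP->.
  by rewrite /= !inE d12.
have nc : negc D = ([:: (1, neg l1); (1, neg l2)], 2).
  by rewrite /negc nD /= !big_cons big_nil.
have nn : normalize (negc D) = negc D.
  rewrite nc; apply: normalize_nf; last by move=> t; rewrite !inE => /orP[]/eqP->.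
  by rewrite /= !inE d12.
have pos : forall t, t \in (negc D).1 -> 0 <= t.1.
  by rewrite nc => t; rewrite !inE => /orP[]/eqP->.
have inD : negc D \in negc D :: G by rewrite inE eqxx.
have r1 : up_reach (negc D :: G) [:: neg l1].
  apply: (prop_step (c := 1) (up_nil _) inD) => //; first by rewrite nn nc !inE eqxx.
  by rewrite nc /= !big_cons big_nil; ifs.
have r2 : up_reach (negc D :: G) [:: neg l2; neg l1].
  apply: (prop_step (c := 1) r1 inD) => //; first by rewrite nn nc !inE eqxx ?orbT.
  - by rewrite inE lit_neq // !neg_fst eq_sym.
  - by rewrite inE lit_neq // !neg_fst eq_sym.
  - by rewrite nc /= !big_cons big_nil; ifs.
exists [:: neg l2; neg l1]; exists E; first by rewrite inE EG orbT.
by split => //; apply: conflict_step r2 Epos conf.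
Qed.

Lemma eqT a b : (T a == T b) = (a == b). Proof. by []. Qed.
Lemma eqS a b : (S a == S b) = (a == b). Proof. by []. Qed.
Lemma eqX a b : (X a == X b) = (a == b). Proof. by []. Qed.

Lemma rup_unit G j : ([:: (1, (T j.+1, true))], 1) \in G ->
  forall E, E \in G -> (forall t, t \in E.1 -> 0 <= t.1) ->
  \sum_(t <- E.1) (if neg t.2 \in [:: (T j.+1, true); (T j, false)] then 0 else t.1) - E.2 < 0 ->
  rup_step G ([:: (1, (T j, true))], 1).
Proof.
move=> uG E EG Epos conf.
set D := (_, 1).
have nD : normalize D = D by apply: normalize_nf => // t; rewrite !inE => /eqP->.
have nc : negc D = ([:: (1, (T j, false))], 1).
  by rewrite /negc nD /= !big_cons big_nil.
have nn : normalize (negc D) = negc D.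
  by rewrite nc; apply: normalize_nf => // t; rewrite !inE => /eqP->.
have inD : negc D \in negc D :: G by rewrite inE eqxx.
have r1 : up_reach (negc D :: G) [:: (T j, false)].
  apply: (prop_step (c := 1) (up_nil _) inD) => //; first by rewrite nn nc !inE eqxx.
    by rewrite nc => t; rewrite !inE => /eqP->.
  by rewrite nc /= !big_cons big_nil; ifs.
have r2 : up_reach (negc D :: G) [:: (T j.+1, true); (T j, false)].
  have uG' : ([:: (1, (T j.+1, true))], 1) \in negc D :: G by rewrite inE uG orbT.
  apply: (prop_step (c := 1) r1 uG') => //.
  - by rewrite normalize_nf // ?inE // => t; rewrite !inE => /eqP->.
  - by rewrite inE xpair_eqE /= andbF.
  - by rewrite inE /neg /= xpair_eqE /= eqT (gtn_eqF (ltnSn j)).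
  - by move=> t; rewrite !inE => /eqP->.
  - by rewrite /= !big_cons big_nil /= !inE; ifs.
exists [:: (T j.+1, true); (T j, false)]; exists E; first by rewrite inE EG orbT.
by split => //; apply: conflict_step r2 Epos conf.
Qed.

Section Conc.
Variables (p q : nat -> lit).
Definition sl j : lit := (S j, true).
Definition tl j : lit := (T j, true).
Definition u j : pbc := ([:: (1, (T j, true))], 1).
Definition B1 : pbc := ([:: (2, sl 1); (1, neg (p 1)); (1, q 1)], 2).
Definition Bj j : pbc := ([:: (2, sl j.+1); (2, neg (sl j)); (1, neg (p j.+1)); (1, q j.+1)], 2).
Definition T1c : pbc := ([:: (1, neg (tl 1)); (1, q 1); (1, neg (p 1))], 1).
Definition Cj j : pbc := ([:: (4, neg (tl j.+1)); (3, tl j); (1, neg (sl j)); (1, q j.+1);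
                           (1, neg (p j.+1))], 4).
Definition D1 : pbc := ([:: (1, sl 1); (1, neg (p 1))], 1).
Definition D2 j : pbc := ([:: (1, sl j.+1); (1, neg (sl j)); (1, neg (p j.+1))], 1).
Definition D3 : pbc := ([:: (1, sl 1); (1, q 1)], 1).
Definition D4 j : pbc := ([:: (1, sl j.+1); (1, neg (sl j)); (1, q j.+1)], 1).
Definition D5 : pbc := ([:: (1, q 1); (1, neg (p 1))], 1).
Definition D6 j : pbc := ([:: (1, neg (sl j)); (1, q j.+1); (1, neg (p j.+1))], 1).

Lemma sb_eq k : sb_clauses p q k =
  [:: D1] ++ map D2 (iota 1 (k - 2)) ++ [:: D3] ++ map D4 (iota 1 (k - 2)) ++ [:: D5]
  ++ map D6 (iota 1 (k - 1)).
Proof. by []. Qed.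

Lemma tk_eq k : tk_unit k = u k. Proof. by []. Qed.

Lemma B1_in k : B1 \in circuit p q k.
Proof. by rewrite /circuit !mem_cat !inE eqxx ?orbT. Qed.

Lemma Bj_in k j : (1 <= j <= k - 2)%N -> Bj j \in circuit p q k.
Proof.
move=> hj; rewrite /circuit !mem_cat; apply/orP; right; apply/orP; left.
apply/flatten_mapP; exists j; first by rewrite mem_iota; lia.
by rewrite !inE eqxx ?orbT.
Qed.

Lemma T1c_in k : T1c \in circuit p q k.
Proof. by rewrite /circuit !mem_cat !inE eqxx ?orbT. Qed.

Lemma Cj_in k j : (1 <= j <= k - 1)%N -> Cj j \in circuit p q k.
Proof.
move=> hj; rewrite /circuit !mem_cat; apply/orP; right; apply/orP; right.
apply/orP; right; apply/flatten_mapP; exists j; first by rewrite mem_iota; lia.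
by rewrite !inE eqxx ?orbT.
Qed.

Definition isX (v : var) := if v is X _ then true else false.
Lemma isX_S v j : isX v -> (S j == v) = false. Proof. by case: v. Qed.
Lemma isX_T v j : isX v -> (T j == v) = false. Proof. by case: v. Qed.
Lemma Sneq j : (S j.+1 == S j) = false. Proof. by rewrite eqS (gtn_eqF (ltnSn j)). Qed.

Lemma allpos (E : pbc) : all (fun t => 0 <= t.1) E.1 -> forall t, t \in E.1 -> 0 <= t.1.
Proof. by move/allP. Qed.

Ltac confl := rewrite /= !big_cons big_nil /= ?neg_inv !inE !eqxx /= ?orbT; ifs.

Lemma step_D1 G : (forall j, isX (p j).1) -> B1 \in G -> step G D1.
Proof.
move=> hp BG; left; apply: (rup2 (E := B1)) => //.
  by rewrite /= (isX_S _ (hp 1)).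
  exact: (@allpos B1).
by confl.
Qed.

Lemma step_D3 G : (forall j, isX (q j).1) -> B1 \in G -> step G D3.
Proof.
move=> hq BG; left; apply: (rup2 (E := B1)) => //.
  by rewrite /= (isX_S _ (hq 1)).
  exact: (@allpos B1).
by confl.
Qed.

Lemma step_D2 G j : (forall j, isX (p j).1) -> Bj j \in G -> step G (D2 j).
Proof.
move=> hp BG; left; apply: (rup3 (E := Bj j)) => //.
  - by rewrite /= Sneq.
  - by rewrite /= (isX_S _ (hp _)).
  - by rewrite /= (isX_S _ (hp _)).
  - exact: (@allpos (Bj j)).
by confl.
Qed.

Lemma step_D4 G j : (forall j, isX (q j).1) -> Bj j \in G -> step G (D4 j).
Proof.
move=> hq BG; left; apply: (rup3 (E := Bj j)) => //.
  - by rewrite /= Sneq.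
  - by rewrite /= (isX_S _ (hq _)).
  - by rewrite /= (isX_S _ (hq _)).
  - exact: (@allpos (Bj j)).
by confl.
Qed.

Lemma step_u G j : u j.+1 \in G -> Cj j \in G -> step G (u j).
Proof.
move=> uG CG; left; apply: (rup_unit uG CG); first exact: (@allpos (Cj j)).
by confl.
Qed.

Definition E5 : pbc := addc T1c (u 1).
Definition X1 j : pbc := mulc 4 (u j.+1).
Definition X2 j : pbc := addc (Cj j) (X1 j).
Definition X3 j : pbc := mulc 3 (lit_axiom (T j, false)).
Definition X4 j : pbc := addc (X2 j) (X3 j).

Ltac casebool := repeat match goal with |- context [if ?b then _ else _] => case: b end.

Lemma pequiv_E5 : pequiv D5 E5.
Proof.
rewrite /pequiv /coefv /rhs /=; split; [move=> v|];
  rewrite !big_cons !big_nil /= ?addr0; casebool; lia.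
Qed.

Lemma pequiv_X4 j : pequiv (D6 j) (X4 j).
Proof.
rewrite /pequiv /coefv /rhs /=; split; [move=> v|];
  rewrite !big_cons !big_nil /= ?addr0; casebool; lia.
Qed.

Lemma Lu_valid k m : (0 < k)%N -> (m <= k - 1)%N ->
  valid_deriv (rcons (circuit p q k) (tk_unit k)) (map u (rev (iota (k - m) m))).
Proof.
move=> k0; elim: m => [//|m IH] hm.
have e : (k - m = (k - m.+1).+1)%N by lia.
have -> : iota (k - m.+1)%N m.+1 = (k - m.+1)%N :: iota (k - m)%N m by rewrite e.
rewrite rev_cons map_rcons -[rcons (map _ _) _]cats1; apply: valid_cat; first by apply: IH; lia.
apply: valid_each => C; rewrite inE => /eqP ->; apply: step_u.
  rewrite -e mem_cat; case: m IH hm e => [|m] IH hm e.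
    by rewrite subn0 mem_rcons inE tk_eq eqxx.
  by rewrite (map_f u) ?orbT // mem_rev mem_iota; lia.
by rewrite mem_cat mem_rcons inE Cj_in ?orbT //; lia.
Qed.

Lemma main k : (0 < k)%N -> (forall j, isX (p j).1) -> (forall j, isX (q j).1) ->
  exists L : seq pbc, (size L <= 7 * k)%N /\
    derives (rcons (circuit p q k) (tk_unit k)) L (sb_clauses p q k).
Proof.
move=> k0 hp hq.
set G0 := rcons (circuit p q k) (tk_unit k).
set js := iota 1 (k - 1).
set Lu := map u (rev js).
set Ls := [:: D1] ++ map D2 (iota 1 (k - 2)) ++ [:: D3] ++ map D4 (iota 1 (k - 2)) ++ [:: E5].
exists (Lu ++ (Ls ++ (map X1 js ++ (map X2 js ++ (map X3 js ++ map X4 js))))).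
split.
  rewrite !size_cat /Ls /= ?size_cat !size_map size_rev !size_iota /=; lia.
have inG0 : forall C G, C \in G0 -> C \in G0 ++ G by move=> C G h; rewrite mem_cat h.
have uin : forall j, (1 <= j <= k)%N -> u j \in G0 ++ Lu.
  move=> j hj; rewrite mem_cat; case: (ltnP j k) => hjk.
    by rewrite (map_f u) ?orbT // mem_rev mem_iota; lia.
  have -> : j = k by lia.
  by rewrite mem_rcons inE tk_eq eqxx.
split.
  apply: valid_cat.
    have := Lu_valid (m := (k - 1)%N) k0 (leqnn _).
    by have -> : (k - (k - 1) = 1)%N by lia.
  apply: valid_cat.
    apply: valid_each => C; rewrite !mem_cat !inE => /orP[/eqP->|/orP[/mapP[j hj ->]|/orP[/eqP->|/orP[/mapP[j hj ->]|/eqP->]]]].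
    - by apply: step_D1 => //; rewrite mem_cat mem_rcons inE B1_in orbT.
    - apply: step_D2 => //; rewrite mem_cat mem_rcons inE Bj_in ?orbT //.
      by move: hj; rewrite mem_iota; lia.
    - by apply: step_D3 => //; rewrite mem_cat mem_rcons inE B1_in orbT.
    - apply: step_D4 => //; rewrite mem_cat mem_rcons inE Bj_in ?orbT //.
      by move: hj; rewrite mem_iota; lia.
    - right; apply: cp_add; left.
        by rewrite mem_cat mem_rcons inE T1c_in orbT.
      by apply: uin; lia.
  have inC : forall C G, C \in circuit p q k -> C \in G0 ++ G.
    by move=> C G h; rewrite mem_cat mem_rcons inE h orbT.
  have jr : forall j, j \in js -> (1 <= j <= k - 1)%N by move=> j; rewrite mem_iota; lia.
  apply: valid_cat.
    apply: valid_each => C /mapP[j hj ->]; right; apply: cp_mul => //; left.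
    by rewrite mem_cat uin //; have := jr j hj; lia.
  apply: valid_cat.
    apply: valid_each => C /mapP[j hj ->]; right; apply: cp_add; left.
      by rewrite -!catA inC // Cj_in // jr.
    by rewrite !mem_cat (map_f X1 hj) !orbT.
  apply: valid_cat.
    apply: valid_each => C /mapP[j hj ->]; right; apply: cp_mul => //; right.
    by exists (T j, false).
  apply: valid_each => C /mapP[j hj ->]; right; apply: cp_add; left.
    by rewrite !mem_cat (map_f X2 hj) !orbT.
  by rewrite !mem_cat (map_f X3 hj) !orbT.
move=> D; rewrite sb_eq !mem_cat !inE.
move=> /orP[/eqP->|/orP[/mapP[j hj ->]|/orP[/eqP->|/orP[/mapP[j hj ->]|/orP[/eqP->|/mapP[j hj ->]]]]]].
- by exists D1; [rewrite !mem_cat !inE eqxx !orbT | split].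
- by exists (D2 j); [rewrite !mem_cat !inE (map_f D2 hj) !orbT | split].
- by exists D3; [rewrite !mem_cat !inE eqxx !orbT | split].
- by exists (D4 j); [rewrite !mem_cat !inE (map_f D4 hj) !orbT | split].
- by exists E5; [rewrite !mem_cat !inE eqxx !orbT | exact: pequiv_E5].
- by exists (X4 j); [rewrite !mem_cat !inE (map_f X4 hj) !orbT | exact: pequiv_X4].
Qed.
End Conc.

Local Close Scope ring_scope.

Theorem lemma17 :
  exists c : nat, forall (F : seq ocons) (sigma : olit -> olit) (supp : seq nat),
    is_symmetry F sigma supp -> (0 < size supp)%N ->
    exists L : seq pbc,
      (size L <= c * size supp)%N /\
      derives (rcons (circuit (pvar supp) (qvar sigma supp) (size supp)) (tk_unit (size supp)))
              L (sb_clauses (pvar supp) (qvar sigma supp) (size supp)).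
Proof.
exists 7%N => F sigma supp _ k0.
by apply: main.
Qed.
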